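(* Let $N_k=N\cup\{\Gamma\rightarrow E[x]_{p,q}\}$ and $N_{k+1}=N\cup\{\Gamma\{x\mapsto x'\},\Gamma\rightarrow E[x']_q\}$ be obtained by a Linear transformation. Let $N^\bot_{k+1}$ be a conflicting core of $N_{k+1}$, and let $(\Gamma\{x\mapsto x'\},\Gamma\rightarrow E[x']_q)\sigma_j$, $1\le j\le m$, be the clauses of $N^\bot_{k+1}$ that are instances of $\Gamma\{x\mapsto x'\},\Gamma\rightarrow E[x']_q$. If $x\sigma_j=x'\sigma_j$ for all $1\le j\le m$, then $$\big(N^\bot_{k+1}\setminus\{(\Gamma\{x\mapsto x'\},\Gamma\rightarrow E[x']_q)\sigma_j\mid 1\le j\le m\}\big)\cup\{(\Gamma\rightarrow E[x]_{p,q})\sigma_j\mid 1\le j\le m\}$$ is a conflicting core of $N_k$.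
   Context: First-order logic without equality. A clause is a finite multiset of literals written $\Gamma \rightarrow \Delta$. A Herbrand interpretation is a set of ground atoms; $I \models \Gamma\rightarrow\Delta$ iff for every grounding substitution $\sigma$, $\Delta\sigma\cap I\neq\emptyset$ or $\Gamma\sigma\not\subseteq I$. $E[x]_{p,q}$ denotes an atom with occurrences of variable $x$ at two different positions $p,q$, and $E[x']_q$ the atom obtained by replacing the occurrence at $q$ by $x'$. Linear transformation: $N\cup\{\Gamma\rightarrow E[x]_{p,q}\}\Rightarrow N\cup\{\Gamma\{x\mapsto x'\},\Gamma\rightarrow E[x']_q\}$ with $x'$ a fresh variable. A finite clause set $N^\bot$ is a conflicting core if for every substitution $\tau$ grounding all of $N^\bot$ (one substitution for the whole set, so variables are shared among clauses) the set $N^\bot\tau$ is unsatisfiable. $N^\bot$ is a conflicting core of $N$ if moreover every $C\in N^\bot$ equals $C'\sigma$ for some $C'\in N$ and substitution $\sigma$. *)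

(* Defs.v *)
From Stdlib Require Import List Arith Permutation.
Import ListNotations.

Inductive term : Type :=
| Var : nat -> term
| Fn  : nat -> list term -> term.

Definition subst := nat -> term.

Fixpoint tsubst (s : subst) (t : term) : term :=
  match t with
  | Var v => s v
  | Fn f ts => Fn f (map (tsubst s) ts)
  end.

Fixpoint tvars (t : term) : list nat :=
  match t with
  | Var v => [v]
  | Fn _ ts => flat_map tvars ts
  end.

Definition ground (t : term) : Prop := tvars t = [].

Record atom := Atom { apred : nat; aargs : list term }.

Definition asubst (s : subst) (A : atom) : atom :=
  Atom (apred A) (map (tsubst s) (aargs A)).
Definition avars (A : atom) : list nat := flat_map tvars (aargs A).

(* A clause  Gamma -> Delta ; lists read as multisets (see clause_eqv). *)
Record clause := Cl { ante : list atom; succ : list atom }.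

Definition csubst (s : subst) (C : clause) : clause :=
  Cl (map (asubst s) (ante C)) (map (asubst s) (succ C)).
Definition cvars (C : clause) : list nat :=
  flat_map avars (ante C) ++ flat_map avars (succ C).

Definition clause_eqv (C D : clause) : Prop :=
  Permutation (ante C) (ante D) /\ Permutation (succ C) (succ D).

Definition is_instance (C D : clause) : Prop :=
  exists s : subst, clause_eqv C (csubst s D).

(* Herbrand interpretations: sets of (ground) atoms *)
Definition interp := atom -> Prop.

Definition models (I : interp) (C : clause) : Prop :=
  forall s : subst, (forall v, In v (cvars C) -> ground (s v)) ->
    (exists A, In A (succ (csubst s C)) /\ I A) \/
    ~ (forall A, In A (ante (csubst s C)) -> I A).

Definition clause_set := clause -> Prop.

Definition satisfiable (S : clause_set) : Prop :=
  exists I : interp, forall C, S C -> models I C.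

Definition finite_set (S : clause_set) : Prop :=
  exists l : list clause, forall C, S C <-> In C l.

(* tau grounds all clauses of S (one substitution for the whole set) *)
Definition grounds (t : subst) (S : clause_set) : Prop :=
  forall C, S C -> forall v, In v (cvars C) -> ground (t v).

Definition set_subst (t : subst) (S : clause_set) : clause_set :=
  fun C => exists C0, S C0 /\ C = csubst t C0.

Definition conflicting_core (S : clause_set) : Prop :=
  finite_set S /\
  forall t : subst, grounds t S -> ~ satisfiable (set_subst t S).

Definition conflicting_core_of (S N : clause_set) : Prop :=
  conflicting_core S /\ forall C, S C -> exists C', N C' /\ is_instance C C'.

(* Positions: an atom position is a nonempty list i :: p (argument i, then
   path p inside that argument term). *)
Fixpoint tsub_at (t : term) (p : list nat) : option term :=
  match p with
  | [] => Some t
  | i :: p' =>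
      match t with
      | Var _ => None
      | Fn _ ts => match nth_error ts i with
                   | Some u => tsub_at u p'
                   | None => None
                   end
      end
  end.

Fixpoint treplace (t : term) (p : list nat) (u : term) : term :=
  match p with
  | [] => u
  | i :: p' =>
      match t with
      | Var _ => t
      | Fn f ts => match nth_error ts i with
                   | Some w => Fn f (firstn i ts ++ treplace w p' u :: skipn (S i) ts)
                   | None => t
                   end
      end
  end.

Definition asub_at (A : atom) (p : list nat) : option term :=
  match p with
  | [] => None
  | i :: p' => match nth_error (aargs A) i with
               | Some w => tsub_at w p'
               | None => None
               end
  end.

Definition areplace (A : atom) (p : list nat) (u : term) : atom :=
  match p with
  | [] => A
  | i :: p' => match nth_error (aargs A) i with
               | Some w => Atom (apred A)
                             (firstn i (aargs A) ++ treplace w p' u :: skipn (S i) (aargs A))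
               | None => A
               end
  end.

Definition rename (x x' : nat) : subst :=
  fun v => if Nat.eqb v x then Var x' else Var v.

Definition lin_orig (Gam : list atom) (E : atom) : clause := Cl Gam [E].
Definition lin_new (Gam : list atom) (E : atom) (x x' : nat) (q : list nat) : clause :=
  Cl (map (asubst (rename x x')) Gam ++ Gam) [areplace E q (Var x')].

Definition add_clause (N : clause_set) (C : clause) : clause_set :=
  fun D => N D \/ D = C.

(* Main.v *)
Require Import Defs.
From Stdlib Require Import List Arith Permutation Classical.
Import ListNotations.

Fixpoint term_ind' (P : term -> Prop) (HV : forall v, P (Var v))
  (HF : forall f ts, Forall P ts -> P (Fn f ts)) (t : term) : P t :=
  match t with
  | Var v => HV v
  | Fn f ts => HF f ts ((fix go l := match l return Forall P l with
                        | [] => Forall_nil _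
                        | u :: l' => Forall_cons _ (term_ind' P HV HF u) (go l') end) ts)
  end.

Lemma tsubst_ext_vars s1 s2 u :
  (forall v, In v (tvars u) -> s1 v = s2 v) -> tsubst s1 u = tsubst s2 u.
Proof.
  revert u; apply (term_ind' (fun u => _ -> _)).
  - intros v H; simpl; apply H; simpl; auto.
  - intros f ts IH H; simpl; f_equal; apply map_ext_in; intros u Hu.
    rewrite Forall_forall in IH; apply IH; auto.
    intros v Hv; apply H; simpl; apply in_flat_map; eauto.
Qed.

Lemma tsubst_comp s1 s2 u :
  tsubst s2 (tsubst s1 u) = tsubst (fun v => tsubst s2 (s1 v)) u.
Proof.
  revert u; apply term_ind'.
  - reflexivity.
  - intros f ts IH; simpl; f_equal; rewrite map_map; apply map_ext_in; intros u Hu.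
    rewrite Forall_forall in IH; apply IH; auto.
Qed.

Lemma tsubst_id u : tsubst Var u = u.
Proof.
  revert u; apply term_ind'.
  - reflexivity.
  - intros f ts IH; simpl; f_equal.
    transitivity (map (fun x => x) ts); [|apply map_id].
    apply map_ext_in; intros u Hu; rewrite Forall_forall in IH; apply IH; auto.
Qed.

Lemma subst_ground s u : ground u -> tsubst s u = u.
Proof.
  intro H. rewrite <- (tsubst_id u) at 2. apply tsubst_ext_vars.
  unfold ground in H; rewrite H; simpl; tauto.
Qed.

Lemma asubst_ext_vars s1 s2 A :
  (forall v, In v (avars A) -> s1 v = s2 v) -> asubst s1 A = asubst s2 A.
Proof.
  intro H; unfold asubst; f_equal; apply map_ext_in; intros u Hu.
  apply tsubst_ext_vars; intros v Hv; apply H; unfold avars; apply in_flat_map; eauto.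
Qed.

Lemma asubst_comp s1 s2 A :
  asubst s2 (asubst s1 A) = asubst (fun v => tsubst s2 (s1 v)) A.
Proof.
  unfold asubst; simpl; f_equal; rewrite map_map; apply map_ext; intro; apply tsubst_comp.
Qed.

Lemma csubst_ext_vars s1 s2 C :
  (forall v, In v (cvars C) -> s1 v = s2 v) -> csubst s1 C = csubst s2 C.
Proof.
  intro H; unfold csubst; f_equal; apply map_ext_in; intros a Ha;
  apply asubst_ext_vars; intros v Hv; apply H; unfold cvars; apply in_app_iff;
  [left|right]; apply in_flat_map; eauto.
Qed.

Lemma csubst_comp s1 s2 C :
  csubst s2 (csubst s1 C) = csubst (fun v => tsubst s2 (s1 v)) C.
Proof.
  unfold csubst; simpl; f_equal; rewrite map_map; apply map_ext; intro; apply asubst_comp.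
Qed.

Lemma csubst_ground s s' C : (forall v, ground (s v)) ->
  csubst s' (csubst s C) = csubst s C.
Proof.
  intro H; rewrite csubst_comp; apply csubst_ext_vars; intros v _; apply subst_ground; auto.
Qed.

Definition G (I : interp) (D : clause) : Prop :=
  (exists A, In A (succ D) /\ I A) \/ ~ (forall A, In A (ante D) -> I A).

Lemma models_G I s C : (forall v, ground (s v)) ->
  (models I (csubst s C) <-> G I (csubst s C)).
Proof.
  intro Hg; split.
  - intro H; specialize (H s (fun v _ => Hg v)); rewrite csubst_ground in H; auto.
  - intros H s' _; rewrite csubst_ground; auto.
Qed.

Lemma G_eqv I C D : clause_eqv C D -> G I D -> G I C.
Proof.
  intros [H1 H2] [[A [HA HI]]|H].
  - left; exists A; split; auto; apply Permutation_in with (succ D); auto; apply Permutation_sym; auto.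
  - right; intro H'; apply H; intros A HA; apply H'; apply Permutation_in with (ante D); auto;
    apply Permutation_sym; auto.
Qed.

Lemma eqv_subst s C D : clause_eqv C D -> clause_eqv (csubst s C) (csubst s D).
Proof. intros [H1 H2]; split; simpl; apply Permutation_map; auto. Qed.

Lemma nth_split {A} (l : list A) i w : nth_error l i = Some w ->
  l = firstn i l ++ w :: skipn (S i) l.
Proof.
  revert i; induction l as [|a l IH]; intros [|i] H; simpl in *; try discriminate.
  - inversion H; auto.
  - f_equal; apply IH; auto.
Qed.

Lemma treplace_lemma s p : forall w u u', tsub_at w p = Some u ->
  tsubst s u' = tsubst s u -> tsubst s (treplace w p u') = tsubst s w.
Proof.
  induction p as [|i p IH]; intros w u u' H1 H2; simpl in *.
  - inversion H1; subst; auto.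
  - destruct w as [v|f ts]; [discriminate|].
    destruct (nth_error ts i) as [w0|] eqn:E; [|discriminate].
    transitivity (tsubst s (Fn f (firstn i ts ++ w0 :: skipn (S i) ts)));
      [|rewrite <- (nth_split ts i w0 E); reflexivity].
    simpl. rewrite !map_app. simpl.
    rewrite (IH w0 u u'); auto.
Qed.

Lemma areplace_lemma s E q x x' : asub_at E q = Some (Var x) -> s x' = s x ->
  asubst s (areplace E q (Var x')) = asubst s E.
Proof.
  intros H1 H2. destruct q as [|i q']; [discriminate|]. simpl in *.
  destruct (nth_error (aargs E) i) as [w|] eqn:Ew; [|discriminate].
  unfold asubst; simpl. f_equal.
  transitivity (map (tsubst s) (firstn i (aargs E) ++ w :: skipn (S i) (aargs E)));
    [|rewrite <- (nth_split (aargs E) i w Ew); reflexivity].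
  rewrite !map_app; simpl.
  rewrite (treplace_lemma s q' w (Var x) (Var x')); auto.
Qed.

Lemma filter_ex {A} (P : A -> Prop) (l : list A) :
  exists l', forall a, In a l' <-> In a l /\ P a.
Proof.
  induction l as [|b l [l' IH]].
  - exists []; simpl; tauto.
  - destruct (classic (P b)) as [Hb|Hb].
    + exists (b :: l'); intro a; simpl; rewrite IH; split.
      * intros [<-|[]]; auto.
      * intros [[<-|]]; auto.
    + exists l'; intro a; simpl; rewrite IH; split.
      * intros []; auto.
      * intros [[<-|] ?]; tauto.
Qed.

Theorem lemma8 (N : clause_set) (Gam : list atom) (E : atom) (x x' : nat)
  (p q : list nat) (Ncore : clause_set) (sigmas : list subst) :
  (* E[x]_{p,q}: x occurs at two different positions p, q of E *)
  p <> q ->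
  asub_at E p = Some (Var x) ->
  asub_at E q = Some (Var x) ->
  (* x' is a fresh variable *)
  ~ In x' (cvars (lin_orig Gam E)) ->
  (forall C, N C -> ~ In x' (cvars C)) ->
  (* Ncore is a conflicting core of N_{k+1} *)
  conflicting_core_of Ncore (add_clause N (lin_new Gam E x x' q)) ->
  (* the sigma_j-instances of the new clause are exactly the clauses of Ncore
     that are instances of it *)
  (forall s, In s sigmas ->
     exists C, Ncore C /\ clause_eqv C (csubst s (lin_new Gam E x x' q))) ->
  (forall C, Ncore C -> is_instance C (lin_new Gam E x x' q) ->
     exists s, In s sigmas /\ clause_eqv C (csubst s (lin_new Gam E x x' q))) ->
  (* x sigma_j = x' sigma_j *)
  (forall s, In s sigmas -> s x = s x') ->
  conflicting_core_of
    (fun C =>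
       (Ncore C /\
        ~ (exists s, In s sigmas /\ clause_eqv C (csubst s (lin_new Gam E x x' q))))
       \/ (exists s, In s sigmas /\ C = csubst s (lin_orig Gam E)))
    (add_clause N (lin_orig Gam E)).
Proof.
  intros Hpq Hp Hq Hfr HN [[[l Hl] Hcore] Hinst] Hs1 Hs2 Hxx.
  split; [split|].
  - destruct (filter_ex (fun C => ~ exists s, In s sigmas /\
        clause_eqv C (csubst s (lin_new Gam E x x' q))) l) as [l' Hl'].
    exists (l' ++ map (fun s => csubst s (lin_orig Gam E)) sigmas). intro C; split.
    + intros [[H1 H2]|[s [Hs ->]]]; apply in_app_iff.
      * left; apply Hl'; split; [apply Hl|]; auto.
      * right; apply (in_map (fun s => csubst s (lin_orig Gam E))); auto.
    + intro H; apply in_app_iff in H; destruct H as [H|H].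
      * apply Hl' in H; destruct H; left; split; [apply Hl|]; auto.
      * apply in_map_iff in H; destruct H as [s [<- Hs]]; right; exists s; auto.
  - intros t Ht [I HI].
    set (t' := fun v => match tvars (t v) with [] => t v | _ => Fn 0 [] end).
    assert (Hg : forall v, ground (t' v)).
    { intro v; unfold t', ground; destruct (tvars (t v)) eqn:e; [exact e|reflexivity]. }
    assert (Hag : forall C, (forall v, In v (cvars C) -> ground (t v)) ->
                  csubst t' C = csubst t C).
    { intros C H; apply csubst_ext_vars; intros v Hv; specialize (H v Hv);
      unfold t'; unfold ground in H; rewrite H; reflexivity. }
    apply (Hcore t'). { intros C _ v _; apply Hg. }
    exists I. intros D [C [HC ->]].
    destruct (classic (exists s, In s sigmas /\
        clause_eqv C (csubst s (lin_new Gam E x x' q)))) as [[s [Hs Heqv]]|Hn].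
    + set (C0 := csubst s (lin_orig Gam E)).
      assert (Hm := HI (csubst t C0) (ex_intro _ C0 (conj (or_intror (ex_intro _ s (conj Hs eq_refl))) eq_refl))).
      rewrite <- Hag in Hm by (intros v Hv; apply (Ht C0); [right; exists s; auto| auto]).
      apply models_G in Hm; [|exact Hg].
      apply models_G; [exact Hg|].
      apply G_eqv with (csubst t' (csubst s (lin_new Gam E x x' q))); [apply eqv_subst; auto|].
      unfold C0 in Hm. rewrite csubst_comp in Hm |- *.
      set (r := fun v => tsubst t' (s v)) in *.
      assert (Hr : r x' = r x) by (unfold r; rewrite (Hxx s Hs); reflexivity).
      unfold lin_new, lin_orig, csubst in *; simpl in *.
      rewrite (areplace_lemma r E q x x' Hq Hr).
      rewrite map_app, map_map.
      assert (Hmm : map (fun a => asubst r (asubst (rename x x') a)) Gam = map (asubst r) Gam).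
      { apply map_ext; intro a; rewrite asubst_comp; apply asubst_ext_vars; intros v _.
        unfold rename; destruct (Nat.eqb v x) eqn:e; simpl; auto.
        apply Nat.eqb_eq in e; subst; auto. }
      rewrite Hmm.
      destruct Hm as [Hm|Hm]; [left; exact Hm|right].
      intro H; apply Hm; intros A HA; apply H; simpl; apply in_app_iff; auto.
    + assert (Hm := HI (csubst t C) (ex_intro _ C (conj (or_introl (conj HC Hn)) eq_refl))).
      rewrite Hag; auto.
      intros v Hv; apply (Ht C); [left; auto|auto].
  - intros C [[HC Hn]|[s [Hs ->]]].
    + destruct (Hinst C HC) as [C' [[HC'|HC'] Hi]].
      * exists C'; split; [left|]; auto.
      * exfalso; apply Hn; subst C'; apply Hs2; auto.
    + exists (lin_orig Gam E); split; [right; auto|].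
      exists s; split; apply Permutation_refl.
Qed.
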